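(* For any terms $s,t$, $\mathbf{W}\models s\approx t$ if, and only if, $\mathbf{R}\models s\approx t$.
   Context: Let $\omega^+=\omega\cup\{\omega\}$ with its natural order. A time warp is a map $f\colon\omega^+\to\omega^+$ preserving arbitrary joins (equivalently, order-preserving with $f(0)=0$ and $f(\omega)=\bigvee\{f(n)\mid n\in\omega\}$). Let $W$ be the set of time warps, ordered pointwise; let $p\in W$ be the predecessor map $p(m)=\bigvee\{n\in\omega\mid n<m\}$; for $f,g\in W$ let $f\backslash g$ be the largest time warp $h$ with $f\circ h\le g$. The time warp algebra is $\mathbf{W}=\langle W,\wedge,\vee,\circ,{}^\star,\mathrm{id}\rangle$ with pointwise meet/join, composition, $f^\star:=f\backslash p$, and identity. A time warp $f$ is regular if there exist $m\in\omega$, $l\in\{0,1\}$ and $k\in\mathbb{Z}\cup\{\omega\}$ with $f(n)=ln+k$ for all $n\in\omega$ with $n\ge m$ (i.e. $f$ is eventually constant or eventually of the form $n\mapsto n+k$). $\mathbf{R}$ denotes the subalgebra of $\mathbf{W}$ consisting of regular time warps. Terms are built from variables using $\wedge,\vee,\cdot,{}',1$, interpreted as $\wedge,\vee,\circ,{}^\star,\mathrm{id}$; an algebra satisfies $s\approx t$ if $s,t$ agree under every assignment into it. *)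

(* Defs.v *)
From Stdlib Require Import Arith ZArith Lia ClassicalEpsilon.

Inductive wp : Type := Fin (n : nat) | Om.

Definition lew (x y : wp) : Prop :=
  match x, y with
  | Fin n, Fin m => n <= m
  | _, Om => True
  | Om, Fin _ => False
  end.

Definition ltw (x y : wp) : Prop := lew x y /\ x <> y.

Definition is_lub (P : wp -> Prop) (y : wp) : Prop :=
  (forall x, P x -> lew x y) /\ (forall z, (forall x, P x -> lew x z) -> lew y z).

(* the join of an arbitrary subset of omega^+ (which is a complete lattice) *)
Definition supw (P : wp -> Prop) : wp :=
  epsilon (inhabits Om) (is_lub P).

Definition minw (x y : wp) : wp :=
  match x, y with
  | Fin n, Fin m => Fin (Nat.min n m)
  | Om, y => y
  | x, Om => x
  end.

Definition maxw (x y : wp) : wp :=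
  match x, y with
  | Fin n, Fin m => Fin (Nat.max n m)
  | Om, _ => Om
  | _, Om => Om
  end.

Definition is_warp (f : wp -> wp) : Prop :=
  (forall x y, lew x y -> lew (f x) (f y)) /\
  f (Fin 0) = Fin 0 /\
  f Om = supw (fun y => exists n, y = f (Fin n)).

Definition lef (f g : wp -> wp) : Prop := forall x, lew (f x) (g x).

Definition pred_warp (x : wp) : wp :=
  supw (fun y => exists n, y = Fin n /\ ltw (Fin n) x).

(* f \ g : the largest time warp h with f o h <= g, computed as the pointwise
   join of all such h *)
Definition resid (f g : wp -> wp) (x : wp) : wp :=
  supw (fun y => exists h, is_warp h /\ lef (fun z => f (h z)) g /\ y = h x).

Definition star (f : wp -> wp) : wp -> wp := resid f pred_warp.

(* regular time warps: eventually n |-> l n + k with l in {0,1}, k in Z ∪ {omega} *)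
Definition regular (f : wp -> wp) : Prop :=
  exists (m : nat) (l : nat) (k : option Z),
    (l = 0 \/ l = 1) /\
    forall n : nat, m <= n ->
      match k with
      | None => f (Fin n) = Om
      | Some k => (0 <= Z.of_nat (l * n) + k)%Z /\
                  f (Fin n) = Fin (Z.to_nat (Z.of_nat (l * n) + k))
      end.

Inductive term : Type :=
  | tVar (i : nat)
  | tMeet (s t : term)
  | tJoin (s t : term)
  | tComp (s t : term)
  | tStar (s : term)
  | tOne.

Fixpoint eval (t : term) (sigma : nat -> wp -> wp) : wp -> wp :=
  match t with
  | tVar i => sigma i
  | tMeet s u => fun x => minw (eval s sigma x) (eval u sigma x)
  | tJoin s u => fun x => maxw (eval s sigma x) (eval u sigma x)
  | tComp s u => fun x => eval s sigma (eval u sigma x)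
  | tStar s => star (eval s sigma)
  | tOne => fun x => x
  end.

(* The algebra with carrier {f | C f} (W for C = is_warp, R for C = regular
   time warps) satisfies s ≈ t. *)
Definition satisfies (C : (wp -> wp) -> Prop) (s t : term) : Prop :=
  forall sigma : nat -> wp -> wp, (forall i, C (sigma i)) ->
    forall x, eval s sigma x = eval t sigma x.

Definition W_carrier (f : wp -> wp) : Prop := is_warp f.
Definition R_carrier (f : wp -> wp) : Prop := is_warp f /\ regular f.

(* Main.v *)
Require Import Defs.
From Stdlib Require Import Arith ZArith Lia ClassicalEpsilon Classical FunctionalExtensionality.

Lemma lew_refl x : lew x x. Proof. destruct x; simpl; auto. Qed.
Lemma lew_trans x y z : lew x y -> lew y z -> lew x z.
Proof. destruct x, y, z; simpl; intros; try tauto; lia. Qed.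
Lemma lew_total x y : lew x y \/ lew y x.
Proof. destruct x, y; simpl; auto; lia. Qed.
Lemma lew_antisym x y : lew x y -> lew y x -> x = y.
Proof. destruct x, y; simpl; intros; try tauto; f_equal; lia. Qed.
Lemma lew_Om x : lew x Om. Proof. destruct x; simpl; auto. Qed.
Lemma lew_0 x : lew (Fin 0) x. Proof. destruct x; simpl; auto; lia. Qed.
Lemma lew_not x y : ~ lew x y -> lew y x.
Proof. intros H. destruct (lew_total x y); tauto. Qed.
Lemma lew_or_S x z : lew x (Fin z) \/ lew (Fin (S z)) x.
Proof. destruct x; simpl; auto; lia. Qed.
Lemma lew_Om_eq x : lew Om x -> x = Om.
Proof. destruct x; simpl; tauto. Qed.
Lemma lew_allK y : (forall K, lew (Fin K) y) -> y = Om.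
Proof. intros H. destruct y as [m|]; auto. specialize (H (S m)). simpl in H; lia. Qed.

Lemma least_nat (P : nat -> Prop) : (exists n, P n) -> exists n, P n /\ forall m, P m -> n <= m.
Proof.
  intros [n Hn]. revert Hn. induction n as [n IH] using lt_wf_ind. intros Hn.
  destruct (classic (exists m, m < n /\ P m)) as [[m [Hm1 Hm2]]|Hno].
  - apply (IH m Hm1 Hm2).
  - exists n. split; auto. intros m Hm. destruct (le_lt_dec n m); auto. exfalso; apply Hno; eauto.
Qed.

Lemma lub_ex P : exists y, is_lub P y.
Proof.
  destruct (classic (exists n, forall x, P x -> lew x (Fin n))) as [H|H].
  - destruct (least_nat _ H) as [n [Hn Hmin]]. exists (Fin n). split; auto.
    intros z Hz. destruct z as [m|]; simpl; [apply Hmin; exact Hz|exact I].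
  - exists Om. split. { intros; apply lew_Om. }
    intros z Hz. destruct z as [m|]; simpl; auto. apply H. exists m. exact Hz.
Qed.

Lemma supw_spec P : is_lub P (supw P).
Proof. unfold supw. apply epsilon_spec. apply lub_ex. Qed.

Lemma supw_eq P y : is_lub P y -> supw P = y.
Proof.
  intros [H1 H2]. destruct (supw_spec P) as [S1 S2]. apply lew_antisym; auto.
Qed.
Lemma supw_ub (P : wp -> Prop) x : P x -> lew x (supw P).
Proof. intros H. apply (proj1 (supw_spec P)). exact H. Qed.
Lemma supw_least (P : wp -> Prop) z : (forall x, P x -> lew x z) -> lew (supw P) z.
Proof. intros H. apply (proj2 (supw_spec P)). exact H. Qed.

Lemma supw_fin_att P c : supw P = Fin c -> (exists x, P x) -> P (Fin c).
Proof.
  intros Hs [x0 Hx0]. destruct (supw_spec P) as [Hub Hl]. rewrite Hs in Hub, Hl.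
  apply NNPP; intro Hn.
  assert (Hlt: forall x, P x -> exists k, x = Fin k /\ k < c).
  { intros x Hx. specialize (Hub x Hx). destruct x as [k|]; simpl in Hub; [|contradiction].
    exists k; split; auto. destruct (Nat.eq_dec k c); [subst; contradiction|lia]. }
  destruct c as [|c].
  - destruct (Hlt x0 Hx0) as [k [_ Hk]]; lia.
  - specialize (Hl (Fin c)). simpl in Hl. assert (S c <= c); [apply Hl|lia].
    intros x Hx. destruct (Hlt x Hx) as [k [-> Hk]]. simpl; lia.
Qed.

Lemma supw_om P : supw P = Om -> forall K, exists x, P x /\ lew (Fin K) x.
Proof.
  intros Hs K. apply NNPP; intro Hn. destruct (supw_spec P) as [_ Hl]. rewrite Hs in Hl.
  specialize (Hl (Fin K)). simpl in Hl. apply Hl. intros x Hx.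
  apply lew_not. intro H. apply Hn. eauto.
Qed.

Definition ev (P : nat -> Prop) := exists M0, forall M, M0 <= M -> P M.
Lemma ev_and (P Q : nat -> Prop) : ev P -> ev Q -> ev (fun M => P M /\ Q M).
Proof. intros [a Ha] [b Hb]. exists (Nat.max a b). intros M HM. split; [apply Ha|apply Hb]; lia. Qed.
Lemma ev_mono (P Q : nat -> Prop) : (forall M, P M -> Q M) -> ev P -> ev Q.
Proof. intros H [a Ha]. exists a. auto. Qed.

Definition conv (a : nat -> wp) (b : wp) : Prop :=
  match b with Fin c => ev (fun n => a n = Fin c) | Om => forall K, ev (fun n => lew (Fin K) (a n)) end.
Definition mono (h : wp -> wp) := forall x y, lew x y -> lew (h x) (h y).

Lemma conv_evc a b : ev (fun n => a n = b) -> conv a b.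
Proof.
  destruct b; simpl; auto. intros H K. eapply ev_mono; [|exact H]. intros n ->; simpl; auto.
Qed.

Lemma warp_conv h : is_warp h -> conv (fun n => h (Fin n)) (h Om).
Proof.
  intros [Hm [H0 Hom]]. destruct (h Om) as [c|] eqn:Hb.
  - assert (Hat: exists n, h (Fin n) = Fin c).
    { assert (HP: (fun y => exists n, y = h (Fin n)) (Fin c)).
      { apply supw_fin_att. rewrite <- Hom; auto. exists (Fin 0), 0; auto. }
      destruct HP as [n Hn]; eauto. }
    destruct Hat as [n0 Hn0]. exists n0. intros n Hn. apply lew_antisym.
    + rewrite <- Hb. apply Hm; apply lew_Om.
    + rewrite <- Hn0. apply Hm. simpl. lia.
  - intros K. destruct (supw_om _ (eq_sym Hom) K) as [x [[n0 ->] Hx]].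
    exists n0. intros n Hn. eapply lew_trans; [exact Hx|apply Hm; simpl; lia].
Qed.

Lemma conv_warp h : mono h -> h (Fin 0) = Fin 0 -> conv (fun n => h (Fin n)) (h Om) -> is_warp h.
Proof.
  intros Hm H0 Hc. split; [exact Hm|split; [exact H0|]].
  symmetry. apply supw_eq. split.
  - intros x [n ->]. apply Hm. apply lew_Om.
  - intros z Hz. revert Hc. destruct (h Om) as [c|] eqn:Hb; intro Hc; simpl in Hc.
    + destruct Hc as [M0 HM0]. rewrite <- (HM0 M0 (le_n _)). apply Hz. eauto.
    + destruct z as [m|]; [|simpl; auto]. destruct (Hc (S m)) as [M0 HM0].
      specialize (HM0 M0 (le_n _)). specialize (Hz _ (ex_intro _ M0 eq_refl)).
      exfalso. pose proof (lew_trans (Fin (S m)) (h (Fin M0)) (Fin m) HM0 Hz) as H. simpl in H; lia.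
Qed.

Lemma minw_mono a a' b b' : lew a a' -> lew b b' -> lew (minw a b) (minw a' b').
Proof. destruct a, a', b, b'; simpl; intros; try tauto; lia. Qed.
Lemma maxw_mono a a' b b' : lew a a' -> lew b b' -> lew (maxw a b) (maxw a' b').
Proof. destruct a, a', b, b'; simpl; intros; try tauto; lia. Qed.

Lemma conv_min a b a' b' : conv a b -> conv a' b' -> conv (fun n => minw (a n) (a' n)) (minw b b').
Proof.
  destruct b as [c|], b' as [c'|]; simpl.
  - intros H1 H2. eapply ev_mono; [|exact (ev_and _ _ H1 H2)]. intros n [-> ->]; reflexivity.
  - intros H1 H2. eapply ev_mono; [|exact (ev_and _ _ H1 (H2 c))]. intros n [E1 E2]. cbv beta in E1, E2.
    rewrite E1. destruct (a' n); simpl in *; auto. f_equal; lia.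
  - intros H1 H2. eapply ev_mono; [|exact (ev_and _ _ (H1 c') H2)]. intros n [E1 E2]. cbv beta in E1, E2.
    rewrite E2. destruct (a n); simpl in *; auto. f_equal; lia.
  - intros H1 H2 K. eapply ev_mono; [|exact (ev_and _ _ (H1 K) (H2 K))]. intros n [E1 E2]. cbv beta in E1, E2.
    destruct (a n), (a' n); simpl in *; auto; lia.
Qed.

Lemma conv_max a b a' b' : conv a b -> conv a' b' -> conv (fun n => maxw (a n) (a' n)) (maxw b b').
Proof.
  destruct b as [c|], b' as [c'|]; simpl.
  - intros H1 H2. eapply ev_mono; [|exact (ev_and _ _ H1 H2)]. intros n [-> ->]; reflexivity.
  - intros H1 H2 K. eapply ev_mono; [|exact (H2 K)]. intros n E. cbv beta in E.
    cbv beta in E. destruct (a n), (a' n); simpl in *; auto; lia.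
  - intros H1 H2 K. eapply ev_mono; [|exact (H1 K)]. intros n E. cbv beta in E.
    destruct (a n), (a' n); simpl in *; auto; lia.
  - intros H1 H2 K. eapply ev_mono; [|exact (H1 K)]. intros n E. cbv beta in E.
    destruct (a n), (a' n); simpl in *; auto; lia.
Qed.

Lemma meet_warp f g : is_warp f -> is_warp g -> is_warp (fun x => minw (f x) (g x)).
Proof.
  intros Hf Hg. pose proof (warp_conv _ Hf) as Cf. pose proof (warp_conv _ Hg) as Cg.
  destruct Hf as [Mf [F0 _]]; destruct Hg as [Mg [G0 _]].
  apply conv_warp.
  - intros x y H. apply minw_mono; auto.
  - cbv beta. rewrite F0, G0. reflexivity.
  - exact (conv_min _ _ _ _ Cf Cg).
Qed.

Lemma join_warp f g : is_warp f -> is_warp g -> is_warp (fun x => maxw (f x) (g x)).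
Proof.
  intros Hf Hg. pose proof (warp_conv _ Hf) as Cf. pose proof (warp_conv _ Hg) as Cg.
  destruct Hf as [Mf [F0 _]]; destruct Hg as [Mg [G0 _]].
  apply conv_warp.
  - intros x y H. apply maxw_mono; auto.
  - cbv beta. rewrite F0, G0. reflexivity.
  - exact (conv_max _ _ _ _ Cf Cg).
Qed.

Lemma id_warp : is_warp (fun x => x).
Proof.
  apply conv_warp.
  - intros x y H; exact H.
  - reflexivity.
  - intros K. exists K. intros n Hn. simpl. lia.
Qed.

Lemma comp_warp f g : is_warp f -> is_warp g -> is_warp (fun x => f (g x)).
Proof.
  intros Hf Hg. pose proof (warp_conv _ Hf) as Cf. pose proof (warp_conv _ Hg) as Cg.
  destruct Hf as [Mf [F0 _]]; destruct Hg as [Mg [G0 _]].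
  apply conv_warp.
  - intros x y H; apply Mf, Mg, H.
  - cbv beta. rewrite G0; exact F0.
  - cbv beta. revert Cg. destruct (g Om) as [c|] eqn:Hg; intro Cg; simpl in Cg.
    + apply conv_evc. eapply ev_mono; [|exact Cg]. intros n E; rewrite E; reflexivity.
    + revert Cf. destruct (f Om) as [d|] eqn:Hf; intro Cf; cbn [conv] in Cf |- *.
      * destruct Cf as [m0 Hm0]. destruct (Cg m0) as [n0 Hn0]. exists n0. intros n Hn.
        apply lew_antisym.
        -- rewrite <- Hf. apply Mf. apply lew_Om.
        -- rewrite <- (Hm0 m0 (le_n _)). apply Mf. apply Hn0; auto.
      * intros K. destruct (Cf K) as [m0 Hm0]. destruct (Cg m0) as [n0 Hn0]. exists n0. intros n Hn.
        eapply lew_trans; [apply (Hm0 m0 (le_n _))|]. apply Mf, Hn0, Hn.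
Qed.

Lemma pred_0 : pred_warp (Fin 0) = Fin 0.
Proof.
  unfold pred_warp. apply supw_eq. split.
  - intros x [n [-> [H1 H2]]]. simpl in H1. exfalso. apply H2. f_equal. lia.
  - intros z _. apply lew_0.
Qed.
Lemma pred_S n : pred_warp (Fin (S n)) = Fin n.
Proof.
  unfold pred_warp. apply supw_eq. split.
  - intros x [m [-> [H1 H2]]]. simpl in *. destruct (Nat.eq_dec m (S n)); [subst; tauto|lia].
  - intros z Hz. apply Hz. exists n. split; auto. split; [simpl; lia|]. intro E; injection E; lia.
Qed.
Lemma pred_Om : pred_warp Om = Om.
Proof.
  unfold pred_warp. apply supw_eq. split.
  - intros; apply lew_Om.
  - intros z Hz. destruct z as [m|]; [|exact I].
    assert (H : lew (Fin (S m)) (Fin m)). { apply Hz. exists (S m). split; auto. split; [exact I|discriminate]. }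
    simpl in H; lia.
Qed.

Definition adj (g : wp -> wp) (n : nat) : wp := supw (fun z => lew (g z) (Fin n)).

Lemma adj_ge g n z : lew (g z) (Fin n) -> lew z (adj g n).
Proof. intros H. unfold adj. apply (supw_ub (fun z => lew (g z) (Fin n))). exact H. Qed.

Lemma adj_spec g n : is_warp g -> lew (g (adj g n)) (Fin n).
Proof.
  intros Hg. pose proof Hg as [Hm [H0 Hom]].
  destruct (adj g n) as [c|] eqn:Ha.
  - apply (supw_fin_att (fun z => lew (g z) (Fin n))). exact Ha.
    exists (Fin 0). rewrite H0; simpl; lia.
  - rewrite Hom. apply supw_least. intros x [k ->].
    destruct (supw_om _ Ha k) as [x [Hx Hkx]].
    eapply lew_trans; [apply Hm; exact Hkx| exact Hx].
Qed.

Lemma adj_iff g n z : is_warp g -> (lew z (adj g n) <-> lew (g z) (Fin n)).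
Proof.
  intros Hg. split.
  - intros H. eapply lew_trans; [apply (proj1 Hg); exact H|apply adj_spec; auto].
  - apply adj_ge.
Qed.

Definition sfun0 (g : wp -> wp) (k : nat) : wp := match k with 0 => Fin 0 | S n => adj g n end.
Definition sfun (g : wp -> wp) (x : wp) : wp :=
  match x with Fin k => sfun0 g k | Om => supw (fun y => exists k, y = sfun0 g k) end.

Lemma sfun0_mono g k k' : is_warp g -> k <= k' -> lew (sfun0 g k) (sfun0 g k').
Proof.
  intros Hg Hk. destruct k as [|k]. apply lew_0. destruct k' as [|k']; [lia|]. simpl.
  apply (proj2 (adj_iff g k' _ Hg)). eapply lew_trans; [apply adj_spec; auto| simpl; lia].
Qed.

Lemma sfun_warp g : is_warp g -> is_warp (sfun g).
Proof.
  intros Hg. split; [|split].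
  - intros [k|] [k'|] H; simpl in H.
    + apply sfun0_mono; auto.
    + apply supw_ub. exists k; reflexivity.
    + contradiction.
    + apply lew_refl.
  - reflexivity.
  - reflexivity.
Qed.

Lemma sfun_below f : is_warp f -> lef (fun z => f (sfun f z)) pred_warp.
Proof.
  intros Hf x. destruct x as [[|n]|]; cbv beta.
  - rewrite pred_0. change (lew (f (Fin 0)) (Fin 0)). rewrite (proj1 (proj2 Hf)). apply lew_refl.
  - rewrite pred_S. apply adj_spec; auto.
  - rewrite pred_Om. apply lew_Om.
Qed.

Lemma sfun_max f h : is_warp f -> is_warp h -> lef (fun z => f (h z)) pred_warp -> forall x, lew (h x) (sfun f x).
Proof.
  intros Hf Hh Hle. destruct Hh as [Hm [H0 Hom]].
  assert (Hfin: forall k, lew (h (Fin k)) (sfun0 f k)).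
  { intros [|n].
    - rewrite H0. apply lew_refl.
    - simpl. apply adj_ge. specialize (Hle (Fin (S n))). cbv beta in Hle. rewrite pred_S in Hle. exact Hle. }
  intros [k|].
  - apply Hfin.
  - rewrite Hom. apply supw_least. intros y [k ->]. eapply lew_trans; [apply Hfin|].
    apply (supw_ub (fun y => exists k, y = sfun0 f k)). exists k; reflexivity.
Qed.

Lemma star_eq f x : is_warp f -> star f x = sfun f x.
Proof.
  intros Hf. unfold star, resid. apply supw_eq. split.
  - intros y [h [Hh [Hle ->]]]. apply sfun_max; auto.
  - intros z Hz. apply Hz. exists (sfun f). split; [apply sfun_warp; auto|split; [|reflexivity]].
    apply sfun_below; auto.
Qed.

Lemma star_eq_fun f : is_warp f -> star f = sfun f.
Proof. intros Hf. apply functional_extensionality. intros x; apply star_eq; auto. Qed.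

Definition fv (f : wp -> wp) := forall n, f (Fin n) <> Om.
Definition good (G : nat -> wp -> wp) (g : wp -> wp) : Prop :=
  (forall M, is_warp (G M)) /\ is_warp g /\ (forall x, ev (fun M => G M x = g x)) /\
  (fv g -> ev (fun M => fv (G M))).

Lemma mono_Om h x y : is_warp h -> h x = Om -> lew x y -> h y = Om.
Proof. intros Hh E L. apply lew_Om_eq. rewrite <- E. apply (proj1 Hh). exact L. Qed.

Lemma good_one : good (fun M x => x) (fun x => x).
Proof.
  split; [|split; [|split]].
  - intros; apply id_warp.
  - apply id_warp.
  - intros x; exists 0; auto.
  - intros H; exists 0; auto.
Qed.

Lemma good_meet G1 g1 G2 g2 : good G1 g1 -> good G2 g2 ->
  good (fun M x => minw (G1 M x) (G2 M x)) (fun x => minw (g1 x) (g2 x)).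
Proof.
  intros [W1 [w1 [A1 D1]]] [W2 [w2 [A2 D2]]]. split; [|split; [|split]].
  - intros M; apply meet_warp; auto.
  - apply meet_warp; auto.
  - intros x. eapply ev_mono; [|exact (ev_and _ _ (A1 x) (A2 x))]. intros M [E1 E2].
    cbv beta in *. rewrite E1, E2; reflexivity.
  - intros Hfv. destruct (classic (fv g1)) as [F1|F1].
    + eapply ev_mono; [|exact (D1 F1)]. intros M F n E. apply (F n).
      destruct (G1 M (Fin n)), (G2 M (Fin n)); simpl in E; congruence.
    + destruct (classic (fv g2)) as [F2|F2].
      * eapply ev_mono; [|exact (D2 F2)]. intros M F n E. apply (F n).
        destruct (G1 M (Fin n)), (G2 M (Fin n)); simpl in E; congruence.
      * exfalso. unfold fv in F1, F2.
        apply not_all_ex_not in F1. apply not_all_ex_not in F2.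
        destruct F1 as [n1 N1]; destruct F2 as [n2 N2].
        apply NNPP in N1; apply NNPP in N2.
        apply (Hfv (Nat.max n1 n2)). cbv beta.
        rewrite (mono_Om g1 (Fin n1)), (mono_Om g2 (Fin n2)); auto; simpl; lia.
Qed.

Lemma good_join G1 g1 G2 g2 : good G1 g1 -> good G2 g2 ->
  good (fun M x => maxw (G1 M x) (G2 M x)) (fun x => maxw (g1 x) (g2 x)).
Proof.
  intros [W1 [w1 [A1 D1]]] [W2 [w2 [A2 D2]]]. split; [|split; [|split]].
  - intros M; apply join_warp; auto.
  - apply join_warp; auto.
  - intros x. eapply ev_mono; [|exact (ev_and _ _ (A1 x) (A2 x))]. intros M [E1 E2].
    cbv beta in *. rewrite E1, E2; reflexivity.
  - intros Hfv.
    assert (F1 : fv g1). { intros n E. apply (Hfv n). cbv beta. rewrite E. reflexivity. }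
    assert (F2 : fv g2). { intros n E. apply (Hfv n). cbv beta. rewrite E. destruct (g1 (Fin n)); reflexivity. }
    eapply ev_mono; [|exact (ev_and _ _ (D1 F1) (D2 F2))]. intros M [H1 H2] n. cbv beta.
    specialize (H1 n); specialize (H2 n).
    destruct (G1 M (Fin n)), (G2 M (Fin n)); simpl; congruence.
Qed.

Lemma good_comp G1 g1 G2 g2 : good G1 g1 -> good G2 g2 ->
  good (fun M x => G1 M (G2 M x)) (fun x => g1 (g2 x)).
Proof.
  intros [W1 [w1 [A1 D1]]] [W2 [w2 [A2 D2]]]. split; [|split; [|split]].
  - intros M; apply comp_warp; auto.
  - apply comp_warp; auto.
  - intros x. eapply ev_mono; [|exact (ev_and _ _ (A2 x) (A1 (g2 x)))]. intros M [E1 E2].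
    cbv beta in *. rewrite E1, E2; reflexivity.
  - intros Hfv. destruct (g1 Om) as [c|] eqn:Hc.
    + eapply ev_mono; [|exact (A1 Om)]. intros M E n Hn. cbv beta in Hn, E.
      assert (L: lew (G1 M (G2 M (Fin n))) (G1 M Om)) by (apply (proj1 (W1 M)); apply lew_Om).
      rewrite Hn, E, Hc in L. simpl in L. exact L.
    + assert (F2 : fv g2). { intros n E. apply (Hfv n). cbv beta. rewrite E, Hc. reflexivity. }
      pose proof (warp_conv _ w2) as C2.
      destruct (g2 Om) as [d|] eqn:Hd; cbn [conv] in C2.
      * destruct C2 as [k0 Hk0]. specialize (Hk0 k0 (le_n _)).
        assert (Nd : g1 (Fin d) <> Om). { rewrite <- Hk0. apply Hfv. }
        eapply ev_mono; [|exact (ev_and _ _ (A2 Om) (A1 (Fin d)))]. intros M [E2 E1] n Hn.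
        cbv beta in *.
        assert (L: lew (G2 M (Fin n)) (Fin d)) by (rewrite <- Hd, <- E2; apply (proj1 (W2 M)); apply lew_Om).
        assert (L2 := proj1 (W1 M) _ _ L). rewrite Hn, E1 in L2. apply Nd. apply lew_Om_eq. exact L2.
      * assert (F1 : fv g1).
        { intros m E. destruct (C2 m) as [n0 Hn0]. specialize (Hn0 n0 (le_n _)). cbv beta in Hn0.
          apply (Hfv n0). cbv beta. apply (mono_Om g1 (Fin m)); auto. }
        eapply ev_mono; [|exact (ev_and _ _ (D1 F1) (D2 F2))]. intros M [H1 H2] n Hn.
        cbv beta in *. destruct (G2 M (Fin n)) as [w|] eqn:Ew; [|exact (H2 n Ew)].
        exact (H1 w Hn).
Qed.

Lemma adj_ev G g n : (forall M, is_warp (G M)) -> is_warp g ->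
  (forall x, ev (fun M => G M x = g x)) -> ev (fun M => adj (G M) n = adj g n).
Proof.
  intros HG Hg HA. destruct (adj g n) as [z|] eqn:Ha.
  - assert (H1: lew (g (Fin z)) (Fin n)).
    { apply (proj1 (adj_iff g n (Fin z) Hg)). rewrite Ha. apply lew_refl. }
    assert (H2: ~ lew (g (Fin (S z))) (Fin n)).
    { intro H. apply (adj_iff g n (Fin (S z)) Hg) in H. rewrite Ha in H. simpl in H; lia. }
    eapply ev_mono; [|apply ev_and; [apply (HA (Fin z))|apply (HA (Fin (S z)))]].
    intros M [E1 E2]. cbv beta in *. apply lew_antisym.
    + destruct (lew_or_S (adj (G M) n) z) as [L|L]; auto. exfalso.
      apply (adj_iff (G M) n (Fin (S z)) (HG M)) in L. rewrite E2 in L. tauto.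
    + apply adj_ge. rewrite E1; auto.
  - assert (H1: lew (g Om) (Fin n)).
    { apply (proj1 (adj_iff g n Om Hg)). rewrite Ha. apply lew_refl. }
    eapply ev_mono; [|apply (HA Om)]. intros M E. cbv beta in E.
    apply lew_Om_eq. apply adj_ge. rewrite E; auto.
Qed.

Lemma good_sfun G g : good G g -> good (fun M => sfun (G M)) (sfun g).
Proof.
  intros [W [w [A D]]].
  assert (Afin : forall k, ev (fun M => sfun0 (G M) k = sfun0 g k)).
  { intros [|n]. exists 0; auto. simpl. apply adj_ev; auto. }
  split; [|split; [|split]].
  - intros M; apply sfun_warp; auto.
  - apply sfun_warp; auto.
  - intros [k|]. apply Afin.
    destruct (sfun g Om) as [c|] eqn:Hs.
    + assert (Hs' : supw (fun y => exists k, y = sfun0 g k) = Fin c) by exact Hs.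
      assert (Hat : exists k0, Fin c = sfun0 g k0).
      { apply (supw_fin_att (fun y => exists k, y = sfun0 g k)); auto. exists (Fin 0), 0; auto. }
      destruct Hat as [k0 Hk0].
      assert (HOm : g (Fin (S c)) = Om).
      { destruct (g (Fin (S c))) as [w0|] eqn:Ew; auto. exfalso.
        assert (L : lew (Fin (S c)) (sfun0 g (S w0))).
        { apply adj_ge. rewrite Ew. apply lew_refl. }
        assert (L2 : lew (sfun0 g (S w0)) (Fin c)).
        { rewrite <- Hs'. apply (supw_ub (fun y => exists k, y = sfun0 g k)). eauto. }
        pose proof (lew_trans _ _ _ L L2). simpl in *; lia. }
      eapply ev_mono; [|exact (ev_and _ _ (Afin k0) (A (Fin (S c))))]. intros M [E1 E2].
      cbv beta in *. simpl. apply supw_eq. split.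
      * intros y [[|m] ->]. apply lew_0. simpl.
        destruct (lew_or_S (adj (G M) m) c) as [L|L]; auto. exfalso.
        apply (adj_iff (G M) m (Fin (S c)) (W M)) in L. rewrite E2, HOm in L. exact L.
      * intros z Hz. rewrite Hk0, <- E1. apply Hz. eauto.
    + assert (Hs' : supw (fun y => exists k, y = sfun0 g k) = Om) by exact Hs.
      assert (F : fv g).
      { intros n En. assert (L : lew (sfun g Om) (Fin n)).
        { apply supw_least. intros y [[|m] ->]. apply lew_0. simpl.
          destruct (lew_or_S (adj g m) n) as [L|L]; auto. exfalso.
          apply (adj_iff g m (Fin (S n)) w) in L.
          rewrite (mono_Om g (Fin n) (Fin (S n))) in L; auto. simpl; lia. }
        rewrite Hs in L. exact L. }
      eapply ev_mono; [|exact (D F)]. intros M FM. cbv beta. apply lew_allK. intros K.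
      destruct (G M (Fin K)) as [w0|] eqn:Ew; [|exfalso; exact (FM K Ew)].
      apply lew_trans with (sfun0 (G M) (S w0)).
      * apply adj_ge. rewrite Ew. apply lew_refl.
      * apply (supw_ub (fun y => exists k, y = sfun0 (G M) k)). eauto.
  - intros F.
    assert (HOm : g Om = Om).
    { destruct (g Om) as [c|] eqn:Hc; auto. exfalso. apply (F (S c)). simpl.
      apply lew_Om_eq. apply adj_ge. rewrite Hc. apply lew_refl. }
    eapply ev_mono; [|exact (A Om)]. intros M E [|n] Hn; simpl in Hn; [discriminate|].
    assert (L : lew Om (adj (G M) n)) by (rewrite Hn; apply lew_refl).
    apply adj_iff in L; auto. cbv beta in E. rewrite E, HOm in L. exact L.
Qed.

Lemma good_star G g : good G g -> good (fun M => star (G M)) (star g).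
Proof.
  intros Hg. pose proof Hg as [W [w _]].
  rewrite (star_eq_fun g w).
  replace (fun M => star (G M)) with (fun M => sfun (G M)).
  - apply good_sfun; auto.
  - apply functional_extensionality. intros M. rewrite star_eq_fun; auto.
Qed.

Definition tr (f : wp -> wp) (M : nat) (x : wp) : wp :=
  match x with
  | Fin k => if k <=? M then f (Fin k) else
      match f (Fin M) with Fin a => Fin (a + (k - M)) | Om => Om end
  | Om => Om
  end.
Definition trunc (f : wp -> wp) (M : nat) : wp -> wp :=
  if excluded_middle_informative (fv f /\ f Om = Om) then tr f M else f.

Lemma tr_warp f M : fv f -> is_warp f -> is_warp (tr f M).
Proof.
  intros Hfv Hf. destruct Hf as [Hm [H0 _]].
  destruct (f (Fin M)) as [a|] eqn:Ha; [|exfalso; exact (Hfv M Ha)].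
  assert (Ht: forall k, tr f M (Fin k) = if k <=? M then f (Fin k) else Fin (a + (k - M))).
  { intros k; simpl; rewrite Ha; reflexivity. }
  apply conv_warp.
  - intros [k|] [k'|] Hl.
    + rewrite !Ht. simpl in Hl.
      destruct (Nat.leb_spec k M); destruct (Nat.leb_spec k' M).
      * apply Hm; simpl; lia.
      * eapply lew_trans; [apply (Hm (Fin k) (Fin M)); simpl; exact H|]. rewrite Ha; simpl; lia.
      * lia.
      * simpl; lia.
    + apply lew_Om.
    + simpl in Hl; contradiction.
    + apply lew_refl.
  - rewrite Ht. simpl. exact H0.
  - change (conv (fun n => tr f M (Fin n)) Om). intros K. exists (S (M + K)). intros n Hn.
    rewrite Ht. destruct (Nat.leb_spec n M); [lia|simpl; lia].
Qed.

Lemma trunc_warp f M : is_warp f -> is_warp (trunc f M).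
Proof.
  intros Hf. unfold trunc. destruct excluded_middle_informative as [[H1 H2]|H]; auto.
  apply tr_warp; auto.
Qed.

Lemma trunc_regular f M : is_warp f -> regular (trunc f M).
Proof.
  intros Hf. unfold trunc. destruct excluded_middle_informative as [[Hfv HOm]|Hn].
  - destruct (f (Fin M)) as [a|] eqn:Ha; [|exfalso; exact (Hfv M Ha)].
    exists (S M), 1, (Some (Z.of_nat a - Z.of_nat M)%Z). split; [right; reflexivity|].
    intros n Hn. simpl. rewrite Ha. destruct (Nat.leb_spec n M); [lia|]. split; [lia|].
    f_equal. lia.
  - destruct (classic (exists n, f (Fin n) = Om)) as [[n0 Hn0]|Hno].
    + exists n0, 0, None. split; [left; auto|]. intros n Hn2.
      apply (mono_Om f (Fin n0)); auto.
    + assert (Hfv : fv f) by (intros n E; apply Hno; eauto).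
      pose proof (warp_conv f Hf) as C.
      destruct (f Om) as [c|] eqn:Hc; [|tauto]. cbn [conv] in C. destruct C as [M0 HM0].
      exists M0, 0, (Some (Z.of_nat c)). split; [left; auto|]. intros n Hn2.
      split; [lia|]. rewrite (HM0 n Hn2). f_equal. lia.
Qed.

Lemma good_var f : is_warp f -> good (fun M => trunc f M) f.
Proof.
  intros Hf. split; [|split; [|split]].
  - intros M; apply trunc_warp; auto.
  - exact Hf.
  - intros x. unfold trunc. destruct excluded_middle_informative as [[Hfv HOm]|Hn].
    + destruct x as [k|].
      * exists k. intros M HM. simpl. rewrite (proj2 (Nat.leb_le k M) HM). reflexivity.
      * exists 0. intros M _. simpl. auto.
    + exists 0; auto.
  - intros Hfv. exists 0. intros M _. unfold trunc.
    destruct excluded_middle_informative as [[_ HOm]|Hn]; [|exact Hfv].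
    intros k. simpl. destruct (k <=? M); [apply Hfv|].
    destruct (f (Fin M)) eqn:E; [discriminate|exfalso; exact (Hfv M E)].
Qed.

Lemma eval_good t sigma : (forall i, is_warp (sigma i)) ->
  good (fun M => eval t (fun i => trunc (sigma i) M)) (eval t sigma).
Proof.
  intros Hs. induction t.
  - apply good_var, Hs.
  - exact (good_meet _ _ _ _ IHt1 IHt2).
  - exact (good_join _ _ _ _ IHt1 IHt2).
  - exact (good_comp _ _ _ _ IHt1 IHt2).
  - exact (good_star _ _ IHt).
  - exact good_one.
Qed.

Theorem theorem3p11 (s t : term) :
  satisfies W_carrier s t <-> satisfies R_carrier s t.
Proof.
  split.
  - intros H sigma Hs x. apply H. intros i; apply (proj1 (Hs i)).
  - intros H sigma Hs x.
    destruct (eval_good s sigma Hs) as [_ [_ [As _]]].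
    destruct (eval_good t sigma Hs) as [_ [_ [At _]]].
    destruct (ev_and _ _ (As x) (At x)) as [M0 HM0]. destruct (HM0 M0 (le_n _)) as [E1 E2].
    rewrite <- E1, <- E2. apply H. intros i.
    split; [apply trunc_warp, Hs|apply trunc_regular, Hs].
Qed.
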